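(* Let $G$ be a finite group of order $n$ and let $P_G := \prod_{x \in G} o(x)$. Then $P_G \leq P_{C_n}$, with equality if and only if $G$ is cyclic.
   Context: $o(x)$ denotes the order of the element $x$; $C_n$ denotes the cyclic group of order $n$, and $P_{C_n} = \prod_{x\in C_n} o(x)$. *)

(* Defs.v *)
From mathcomp Require Import all_boot all_fingroup all_solvable.
Set Implicit Arguments. Unset Strict Implicit. Unset Printing Implicit Defensive.

Definition prod_orders (gT : finGroupType) (G : {set gT}) : nat :=
  \prod_(x in G) #[x]%g.

(* Main.v *)
Require Import Defs.
From mathcomp Require Import all_boot all_fingroup all_solvable.
From mathcomp Require Import ssralg zify.

Set Implicit Arguments. Unset Strict Implicit. Unset Printing Implicit Defensive.

Lemma arithA p n d k : prime p -> 0 < n -> d %| n -> 0 < k ->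
  (d %| n`_p^' * p ^ k.-1) = ~~ (p ^ k %| d).
Proof.
move=> pp n0 dn k0.
have d0 : 0 < d by apply: dvdn_gt0 n0 dn.
rewrite -{1}(partnC p d0) Gauss_dvd ?coprime_partC //.
rewrite (dvdn_mulr _ (partn_dvd _ n0 dn)) andbT.
rewrite Gauss_dvdr ?coprime_partC // p_part dvdn_Pexp2l ?prime_gt1 //.
rewrite pfactor_dvdn //; lia.
Qed.

Lemma card_Ldiv_cyclic (cT : finGroupType) (C : {group cT}) m :
  cyclic C -> #|('Ldiv_m(C))%g| %| m.
Proof.
move=> cC.
have gL := group_Ldiv m (cyclic_abelian cC).
pose L := Group gL.
have -> : ('Ldiv_m(C))%g = L by [].
rewrite -exponent_cyclic; last by apply: cyclicS cC; apply: subsetIl.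
by rewrite -sub_LdivT subsetIr.
Qed.

Lemma Frob_leq (gT : finGroupType) (G : {group gT}) m :
  m %| #|G| -> m <= #|('Ldiv_m(G))%g|.
Proof.
move=> mG; apply: dvdn_leq (Frobenius_Ldiv mG).
by apply/card_gt0P; exists 1%g; rewrite !inE group1 expg1n eqxx.
Qed.

Definition cnt (gT : finGroupType) (G : {set gT}) p k :=
  #|[set x in G | p ^ k %| #[x]%g]|.

Lemma cnt_Ldiv (gT : finGroupType) (G : {group gT}) p k :
  prime p -> 0 < k ->
  cnt G p k + #|('Ldiv_(#|G|`_p^' * p ^ k.-1)%N(G))%g| = #|G|.
Proof.
move=> pp k0; set m := (#|G|`_p^' * p ^ k.-1)%N.
rewrite /cnt -[in RHS](cardsID ('Ldiv_m())%g G) addnC.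
congr (_ + _); apply: eq_card => x; rewrite !inE.
case Gx: (x \in G); last by rewrite andbF.
by rewrite andbT -order_dvdn arithA ?negbK ?cardG_gt0 ?order_dvdG ?Gx.
Qed.

Lemma m_dvd n p k : prime p -> 0 < k -> p ^ k %| n -> 0 < n ->
  n`_p^' * p ^ k.-1 %| n.
Proof.
move=> pp k0 pkn n0.
rewrite -{2}(partnC p n0) mulnC dvdn_mul //.
have h : p ^ k.-1 %| n by apply: dvdn_trans pkn; rewrite dvdn_exp2l // leq_pred.
rewrite p_part dvdn_Pexp2l ?prime_gt1 //.
by rewrite -pfactor_dvdn.
Qed.

Lemma cnt_cyc (cT : finGroupType) (C : {group cT}) p k :
  cyclic C -> prime p -> 0 < k -> p ^ k %| #|C| ->
  cnt C p k + #|C|`_p^' * p ^ k.-1 = #|C|.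
Proof.
move=> cC pp k0 pkn.
have mn := m_dvd pp k0 pkn (cardG_gt0 C).
rewrite -[in RHS](cnt_Ldiv C pp k0); congr (_ + _); apply/eqP.
rewrite eqn_leq Frob_leq //= dvdn_leq ?card_Ldiv_cyclic //.
by rewrite muln_gt0 part_gt0 expn_gt0 (prime_gt0 pp).
Qed.

Lemma cnt_zero (gT : finGroupType) (G : {group gT}) p k :
  ~~ (p ^ k %| #|G|) -> cnt G p k = 0.
Proof.
move=> npk; apply: eq_card0 => x; rewrite !inE.
apply/andP=> [[Gx pkx]]; case/negP: npk.
by apply: dvdn_trans pkx (order_dvdG Gx).
Qed.

Lemma cnt_le (gT : finGroupType) (G : {group gT})
  (cT : finGroupType) (C : {group cT}) p k :
  cyclic C -> #|C| = #|G| -> prime p -> 0 < k -> cnt G p k <= cnt C p k.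
Proof.
move=> cC oC pp k0.
have [pkn|npk] := boolP (p ^ k %| #|G|); last by rewrite cnt_zero.
have mn := m_dvd pp k0 pkn (cardG_gt0 G).
have e1 := cnt_Ldiv G pp k0.
have e2 := cnt_cyc cC pp k0 (etrans (congr1 _ oC) pkn : p ^ k %| #|C|).
have e3 := Frob_leq mn.
rewrite oC in e2; lia.
Qed.

Lemma cnt_eq (gT : finGroupType) (G : {group gT})
  (cT : finGroupType) (C : {group cT}) p k :
  cyclic C -> #|C| = #|G| -> prime p -> 0 < k -> p ^ k %| #|G| ->
  cnt G p k = cnt C p k ->
  #|('Ldiv_(#|G|`_p^' * p ^ k.-1)%N(G))%g| = (#|G|`_p^' * p ^ k.-1)%N.
Proof.
move=> cC oC pp k0 pkn E.
have e1 := cnt_Ldiv G pp k0.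
have e2 := cnt_cyc cC pp k0 (etrans (congr1 _ oC) pkn : p ^ k %| #|C|).
rewrite oC in e2; lia.
Qed.

Lemma card_cover (T I : finType) (A : {set T}) (P : pred I) (B : I -> {set T}) :
  (forall x, x \in A -> exists2 i, P i & x \in B i) ->
  #|A| <= \sum_(i | P i) #|B i|.
Proof.
move=> cov; rewrite -sum1_card.
apply: (@leq_trans (\sum_(x in A) \sum_(i | P i) (x \in B i))).
  apply: leq_sum => x Ax; have [i Pi xB] := cov x Ax.
  by rewrite (bigD1 i) //= xB.
rewrite exchange_big /=; apply: leq_sum => i _.
rewrite -sum1_card (big_mkcond (fun x => x \in B i)) big_mkcond /=.
rewrite [leqLHS]big_mkcond /=; apply: leq_sum => x _; by case: (x \in A); case: (x \in B i).
Qed.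

Lemma nodiv n p : prime p -> p %| n -> 0 < n -> ~~ (p ^ logn p n %| n %/ p).
Proof.
move=> pp pn n0; apply/negP => h.
have : p ^ (logn p n).+1 %| n.
  by have := dvdn_mul h (dvdnn p); rewrite divnK // -expnSr.
by rewrite pfactor_dvdn // ltnn.
Qed.

Definition E (gT : finGroupType) (G : {set gT}) p := \sum_(x in G) logn p #[x]%g.

Lemma prod_orders_E (gT : finGroupType) (G : {group gT}) N :
  #|G| <= N -> prod_orders G = \prod_(0 <= p < N.+1) p ^ E G p.
Proof.
move=> GN; rewrite /prod_orders /E.
rewrite (eq_bigr (fun x => \prod_(0 <= p < N.+1) p ^ logn p #[x]%g)); last first.
  move=> x Gx; have xN : #[x]%g <= N.
    exact: leq_trans (dvdn_leq (cardG_gt0 G) (order_dvdG Gx)) GN.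
  by rewrite -{1}(partnT (order_gt0 x)) (widen_partn _ xN).
rewrite exchange_big /=; apply: eq_bigr => p _.
by rewrite expn_sum.
Qed.

Lemma logn_sum p d N : prime p -> 0 < d -> d <= N ->
  logn p d = \sum_(1 <= k < N.+1) (p ^ k %| d).
Proof.
move=> pp d0 dN; rewrite (logn_count_dvd _ pp) (big_nat_widen _ _ N.+1) //; last by lia.
rewrite big_mkcond /=; apply: eq_bigr => k _.
case: ifP => // /negbT; rewrite -leqNgt => dk.
suff -> : (p ^ k %| d) = false by [].
apply/negbTE/negP => /(dvdn_leq d0); rewrite leqNgt.
by rewrite (leq_trans _ (ltn_expl k (prime_gt1 pp))) ?ltnS.
Qed.

Lemma E_cnt (gT : finGroupType) (G : {group gT}) p N :
  prime p -> #|G| <= N -> E G p = \sum_(1 <= k < N.+1) cnt G p k.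
Proof.
move=> pp GN; rewrite /E /cnt.
rewrite (eq_bigr (fun x => \sum_(1 <= k < N.+1) (p ^ k %| #[x]%g))); last first.
  move=> x Gx; apply: logn_sum => //; apply: leq_trans GN.
  exact: dvdn_leq (cardG_gt0 G) (order_dvdG Gx).
rewrite exchange_big /=; apply: eq_bigr => k _.
rewrite -sum1dep_card big_mkcondr /=; apply: eq_bigr => x _.
by case: (_ %| _).
Qed.

Lemma E_nprime (gT : finGroupType) (G : {set gT}) p : ~~ prime p -> E G p = 0.
Proof.
move=> np; rewrite /E big1 // => x _; rewrite lognE.
by rewrite (negbTE np).
Qed.

Section GS.
Local Open Scope group_scope.
Lemma fusion (gT : finGroupType) (G P : {group gT}) p a y :
  p.-Sylow(G) P -> abelian P -> 'N_G(P) \subset 'C(P) ->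
  a \in P -> y \in G -> a ^ y \in P -> a ^ y = a.
Proof.
move=> sylP abP nc Pa Gy Pay.
have sPG := pHall_sub sylP.
have sPC : P \subset 'C_G[a].
  by rewrite subsetI sPG sub_cent1 (subsetP abP).
have sPyC : P :^ y^-1 \subset 'C_G[a].
  rewrite subsetI !sub_conjgV conjGid // sPG /=.
  by rewrite -cent1J sub_cent1 (subsetP abP).
have syl1 : p.-Sylow('C_G[a]) P := pHall_subl sPC (subsetIl _ _) sylP.
have syl2 : p.-Sylow('C_G[a]) (P :^ y^-1).
  apply: pHall_subl sPyC (subsetIl _ _) _.
  by rewrite pHallJ ?groupV.
have [c Cc defP] := Sylow_trans syl1 syl2.
have Nc : c * y \in 'N_G(P).
  rewrite inE groupM ?(subsetP (subsetIl _ _) c Cc) //=.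
  by apply/normP; rewrite conjsgM -defP conjsgKV.
have cay : a ^ (c * y) = a.
  apply/conjg_fixP/commgP.
  have := centP (subsetP nc _ Nc) a Pa; move=> h; first by [].
have ca : a ^ c = a.
  apply/conjg_fixP/commgP; apply: commute_sym; apply/cent1P.
  by move: Cc; rewrite inE => /andP[].
by rewrite -{2}cay conjgM ca.
Qed.

Lemma transfer_P (gT : finGroupType) (G P : {group gT}) p
  (sPG : P \subset G) (abA : abelian (idm P @* P)) g :
  p.-Sylow(G) P -> abelian P -> 'N_G(P) \subset 'C(P) -> g \in P ->
  FiniteModule.fmval (transfer G abA g) = g ^+ #|G : P|.
Proof.
move=> sylP abP nc Pg.
have Gg := subsetP sPG g Pg.
have trX := transversalP (rcosets_cycle_partition sPG Gg).
rewrite (transfer_cycle_expansion sPG abA Gg trX) FiniteModule.fmval_sum.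
rewrite -(sum_index_rcosets_cycle sPG Gg trX).
rewrite (big_morph (fun n => g ^+ n) (expgD g) (expg0 g)).
apply: eq_bigr => x Xx.
have Gx := subsetP (transversal_sub trX) x Xx.
set n := #|<[g]> : P :* x|.
have Pgn : g ^+ n \in P by rewrite groupX.
have Pc : (g ^+ n) ^ x^-1 \in P.
  have := mulg_exp_card_rcosets P g x; rewrite -/n mem_rcoset.
  by rewrite conjgE invgK mulgA.
rewrite (fusion sylP abP nc Pgn (groupVr Gx) Pc) /=.
rewrite FiniteModule.fmodK //; exact: mem_morphim.
Qed.

Lemma burnside_der (gT : finGroupType) (G P : {group gT}) p :
  prime p -> p.-Sylow(G) P -> abelian P -> 'N_G(P) \subset 'C(P) ->
  p^'.-group (G^`(1)).
Proof.
move=> pp sylP abP nc.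
have sPG := pHall_sub sylP.
have abA : abelian (idm P @* P) by rewrite morphim_idm.
pose f := transfer_morphism G abA.
have sDK : G^`(1) \subset 'ker f.
  rewrite /= /commg gen_subG; apply/subsetP => _ /imset2P[x y Gx Gy ->].
  apply/kerP; first by rewrite groupR.
  rewrite morphR //; apply/eqP/commgP.
  exact: GRing.addrC.
have TI : G^`(1) :&: P = 1.
  apply/trivgP/subsetP => g /setIP[Dg Pg]; apply/set1P.
  have := transfer_P sPG abA sylP abP nc Pg.
  rewrite (mker (subsetP sDK g Dg)) => /esym/eqP; rewrite -order_dvdn => odv.
  have pg : p.-elt g := mem_p_elt (pHall_pgroup sylP) Pg.
  have [_ _ p'i] := and3P sylP.
  apply/eqP; rewrite -order_eq1; apply/eqP.
  exact: pnat_1 pg (pnat_dvd odv p'i).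
have sylD := Sylow_setI_normal (der_normal 1 G) sylP.
rewrite /pgroup -partn_eq1 ?cardG_gt0 // -(card_Hall sylD) /=.
by rewrite TI cards1.
Qed.

Lemma sylow_struct (gT : finGroupType) (G P : {group gT}) p :
  prime p -> p %| #|G| -> p.-Sylow(G) P ->
  (cnt G p (logn p #|G|) + #|G| %/ p = #|G|)%N ->
  cyclic P /\ 'N_G(P) \subset 'C(P).
Proof.
move=> pp pn sylP Hc.
set n := #|G| in pn Hc *; set b := logn p n in Hc *.
have n0 : (0 < n)%N := cardG_gt0 G.
have b0 : (0 < b)%N by rewrite logn_gt0 mem_primes pp n0 pn.
have nb : ~~ (p ^ b %| n %/ p)%N := nodiv pp pn n0.
have Esyl : forall x, x \in G -> (p ^ b %| #[x])%N ->
    p.-Sylow(G) <[x.`_p]> /\ x \in 'C_G(<[x.`_p]>).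
  move=> x Gx pbx; have sxG : <[x]> \subset G by rewrite cycle_subG.
  have cx := cycle_constt p x.
  split.
    rewrite pHallE cycle_subG (subsetP sxG _ cx) /= [#|_|]order_constt.
    rewrite !p_part; apply/eqP; congr (p ^ _)%N; apply/eqP.
    rewrite eqn_leq dvdn_leq_log ?order_gt0 ?order_dvdG //=.
    by rewrite -pfactor_dvdn.
  rewrite inE Gx cent_cycle; apply/cent1P; apply: commute_sym; apply/cent1P.
  by rewrite -cent_cycle (subsetP (cycle_abelian x)).
have [x Ex] : exists x, x \in [set x in G | p ^ b %| #[x]]%N.
  apply/card_gt0P; rewrite -/(cnt G p b).
  have := ltn_Pdiv (prime_gt1 pp) n0; lia.
move: Ex; rewrite inE => /andP[Gx pbx].
have cycS : forall S : {group gT}, p.-Sylow(G) S -> cyclic S.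
  move=> S sylS; have [sylY _] := Esyl x Gx pbx.
  have [g Gg ->] := Sylow_trans sylY sylS.
  by rewrite cyclicJ cycle_cyclic.
split; first exact: cycS _ sylP.
set c := #|'C_G(P)|.
have cS : forall S : {group gT}, p.-Sylow(G) S -> #|'C_G(S)| = c.
  move=> S sylS; have [g Gg ->] := Sylow_trans sylP sylS.
  by rewrite centJ -{1}(conjGid Gg) -conjIg cardJg.
have pS : forall S : {group gT}, p.-Sylow(G) S -> (p %| #|'C_G(S)|)%N.
  move=> S sylS; have sSC : S \subset 'C_G(S).
    by rewrite subsetI (pHall_sub sylS) /=; apply: cyclic_abelian; apply: cycS.
  apply: dvdn_trans (cardSg sSC); rewrite (card_Hall sylS) p_part.
  by rewrite -{1}(expn1 p) dvdn_exp2l.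
have bound : forall S : {group gT}, p.-Sylow(G) S ->
    (#|[set y in 'C_G(S) | p ^ b %| #[y]]| <= c - c %/ p)%N.
  move=> S sylS; rewrite -(cS S sylS).
  have pC := pS S sylS.
  set CS := 'C_G(S) in pC *.
  have dv : (#|CS| %/ p %| #|CS|)%N := dvdn_div pC.
  have F := Frob_leq dv.
  set A := [set y in CS | p ^ b %| #[y]]%N in F *.
  set B := ('Ldiv_(#|CS| %/ p)(CS))%g in F *.
  have AB0 : A :&: B = set0.
    apply/setP => y; rewrite !inE; apply/negP => /and3P[/andP[_ pby] _ /eqP yc].
    have : (#[y] %| #|CS| %/ p)%N by rewrite order_dvdn yc.
    have sCG : CS \subset G := subsetIl _ _.
    have : (#|CS| %/ p %| n %/ p)%N.
      rewrite /n -(Lagrange sCG) -divn_mulAC //; exact: dvdn_mulr.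
    move=> h2 h1; case/negP: nb.
    exact: dvdn_trans pby (dvdn_trans h1 h2).
  have sAB : A :|: B \subset CS.
    rewrite subUset; apply/andP; split; last exact: subsetIl.
    by apply/subsetP => y; rewrite inE => /andP[].
  have := cardsUI A B; rewrite AB0 cards0 addn0 => e.
  rewrite leq_subRL ?leq_div // addnC; apply: leq_trans (leq_add (leqnn _) F) _.
  by rewrite -e; exact: subset_leq_card sAB.
have Ecov : (cnt G p b <= \sum_(S in 'Syl_p(G)) #|[set y in 'C_G(S) | p ^ b %| #[y]]|)%N.
  apply: card_cover => y; rewrite inE => /andP[Gy pby].
  have [sylY cY] := Esyl y Gy pby.
  by exists <[y.`_p]>%G; rewrite inE ?sylY ?cY.
have Esum : (cnt G p b <= #|'Syl_p(G)| * (c - c %/ p))%N.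
  apply: leq_trans Ecov _; rewrite -sum_nat_const; apply: leq_sum => S.
  by rewrite inE; exact: bound.
rewrite (card_Syl sylP) in Esum.
have sCN : 'C_G(P) \subset 'N_G(P) := setIS G (cent_sub P).
have sNG : 'N_G(P) \subset G := subsetIl _ _.
have eN := Lagrange sCN; have eG := Lagrange sNG.
set h := #|'N_G(P) : 'C_G(P)| in eN.
set g := #|G : 'N_G(P)| in eG Esum.
have pc : (p %| c)%N := pS P sylP.
have c0 : (0 < c)%N := cardG_gt0 _.
have en : n = (c * (h * g))%N by rewrite /n -eG -eN mulnA.
have enp : (n %/ p = c %/ p * (h * g))%N by rewrite en divn_mulAC.
have ecnt : cnt G p b = (n - n %/ p)%N by rewrite -{1}Hc addnK.
rewrite ecnt enp en -mulnBl mulnC in Esum.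
have cp0 : (0 < c - c %/ p)%N by rewrite subn_gt0 ltn_Pdiv ?prime_gt1.
rewrite leq_pmul2r // in Esum.
have g0 : (0 < g)%N := indexg_gt0 _ _.
have h1 : (h <= 1)%N by rewrite -(leq_pmul2r g0) mul1n.
have : h = 1%N by apply/eqP; rewrite eqn_leq h1 indexg_gt0.
move/eqP; rewrite indexg_eq1 => sNC.
exact: subset_trans sNC (subsetIr _ _).
Qed.

End GS.

Lemma np_form n p : prime p -> p %| n -> 0 < n ->
  n`_p^' * p ^ (logn p n).-1 = n %/ p.
Proof.
move=> pp pn n0.
have b0 : 0 < logn p n by rewrite logn_gt0 mem_primes pp n0 pn.
set b := logn p n in b0 *.
rewrite -[in RHS](partnC p n0) p_part -/b -(prednK b0) expnSr mulnAC.
by rewrite mulnK ?prime_gt0 // mulnC.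
Qed.

Lemma sum_strict m N (F1 F2 : nat -> nat) j : m <= j < N ->
  (forall i, m <= i < N -> F1 i <= F2 i) -> F1 j < F2 j ->
  \sum_(m <= i < N) F1 i < \sum_(m <= i < N) F2 i.
Proof.
move=> /andP[mj jN] le lt.
rewrite !(@big_cat_nat _ _ _ j m N) ?(ltnW jN) // /= !(@big_ltn _ _ _ j N) //.
have A : \sum_(m <= i < j) F1 i <= \sum_(m <= i < j) F2 i.
  rewrite big_nat_cond [leqRHS]big_nat_cond; apply: leq_sum => i /andP[/andP[a b] _].
  by apply: le; rewrite a (ltn_trans b jN).
have C : \sum_(j.+1 <= i < N) F1 i <= \sum_(j.+1 <= i < N) F2 i.
  rewrite big_nat_cond [leqRHS]big_nat_cond; apply: leq_sum => i /andP[/andP[a b] _].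
  by apply: le; rewrite b (leq_trans mj (ltnW a)).
apply: leq_ltn_trans (leq_add A (leqnn _)) _; rewrite ltn_add2l.
by rewrite -addSn; exact: leq_add lt C.
Qed.

Lemma prod_strict m N (F1 F2 : nat -> nat) j : m <= j < N ->
  (forall i, m <= i < N -> F1 i <= F2 i) -> (forall i, m <= i < N -> 0 < F1 i) ->
  F1 j < F2 j ->
  \prod_(m <= i < N) F1 i < \prod_(m <= i < N) F2 i.
Proof.
move=> /andP[mj jN] le pos lt.
rewrite !(@big_cat_nat _ _ _ j m N) ?(ltnW jN) // /= !(@big_ltn _ _ _ j N) //.
have A : \prod_(m <= i < j) F1 i <= \prod_(m <= i < j) F2 i.
  rewrite big_nat_cond [leqRHS]big_nat_cond; apply: leq_prod => i /andP[/andP[a b] _].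
  by apply: le; rewrite a (ltn_trans b jN).
have C : \prod_(j.+1 <= i < N) F1 i <= \prod_(j.+1 <= i < N) F2 i.
  rewrite big_nat_cond [leqRHS]big_nat_cond; apply: leq_prod => i /andP[/andP[a b] _].
  by apply: le; rewrite b (leq_trans mj (ltnW a)).
have A0 : 0 < \prod_(m <= i < j) F1 i.
  rewrite big_nat_cond; apply: (big_ind (fun x => 0 < x)) => //.
    by move=> x y; rewrite muln_gt0 => ->.
  move=> i /andP[/andP[a b] _].
  by apply: pos; rewrite a (ltn_trans b jN).
have C0 : 0 < \prod_(j.+1 <= i < N) F1 i.
  rewrite big_nat_cond; apply: (big_ind (fun x => 0 < x)) => //.
    by move=> x y; rewrite muln_gt0 => ->.
  move=> i /andP[/andP[a b] _].
  by apply: pos; rewrite b (leq_trans mj (ltnW a)).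
apply: (@leq_ltn_trans ((\prod_(m <= i < j) F2 i) * (F1 j * \prod_(j.+1 <= i < N) F2 i))).
  by apply: leq_mul A (leq_mul (leqnn _) C).
rewrite ltn_pmul2l; last exact: leq_trans A0 A.
by rewrite ltn_pmul2r // (leq_trans C0 C).
Qed.

Lemma prod_orders_cyclic (gT : finGroupType) (G : {group gT})
  (cT : finGroupType) (C : {group cT}) :
  cyclic C -> cyclic G -> #|C| = #|G| -> prod_orders G = prod_orders C.
Proof.
move=> cC cG oC.
have : G \isog C by rewrite isog_cyclic_card // cC oC eqxx.
case/isogP=> f injf defC.
rewrite /prod_orders -defC morphimEdom big_imset /=; last first.
  by move=> x y Gx Gy; apply: (injmP injf).
by apply: eq_bigr => x Gx; rewrite order_injm.
Qed.

Unset Implicit Arguments.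
Set Strict Implicit.

Theorem theorem1p3 (gT : finGroupType) (G : {group gT})
  (cT : finGroupType) (C : {group cT}) :
  cyclic C -> #|C| = #|G| ->
  prod_orders G <= prod_orders C /\
  (prod_orders G = prod_orders C <-> cyclic G).
Proof.
move=> cC oC.
set n := #|G| in oC *.
have n0 : 0 < n := cardG_gt0 G.
have lC : #|C| <= n by rewrite oC.
have eG := @prod_orders_E _ G n (leqnn n).
have eC := @prod_orders_E _ C n lC.
have Ele : forall p, E G p <= E C p.
  move=> p; case: (boolP (prime p)) => pp; last by rewrite !E_nprime.
  rewrite (@E_cnt _ G p n pp (leqnn n)) (@E_cnt _ C p n pp lC).
  rewrite big_nat_cond [leqRHS]big_nat_cond; apply: leq_sum => k /andP[/andP[k1 _] _].
  exact: cnt_le cC oC pp k1.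
have Fle : forall p, p ^ E G p <= p ^ E C p.
  case=> [|p]; first by rewrite !E_nprime.
  by apply: leq_pexp2l.
have Fpos : forall p, 0 < p ^ E G p.
  case=> [|p]; first by rewrite !E_nprime.
  by rewrite expn_gt0.
split.
  by rewrite eG eC; apply: leq_prod => p _.
split; last by move=> cG; apply: prod_orders_cyclic.
move=> Heq.
have Eeq : forall p, prime p -> p <= n -> E G p = E C p.
  move=> p pp pn; apply/eqP; rewrite eqn_leq Ele /= leqNgt; apply/negP => lt.
  have : prod_orders G < prod_orders C.
    rewrite eG eC; apply: (prod_strict (j:=p)) => [|i _|i _|].
    - by rewrite ltnS pn.
    - exact: Fle.
    - exact: Fpos.
    - by rewrite ltn_exp2l ?prime_gt1.
  by rewrite Heq ltnn.
have cnteq : forall p, prime p -> p %| n ->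
    cnt G p (logn p n) = cnt C p (logn p n).
  move=> p pp pn.
  have b0 : 0 < logn p n by rewrite logn_gt0 mem_primes pp n0 pn.
  have bn : logn p n < n.+1.
    rewrite ltnS; apply: leq_trans (ltnW (ltn_expl _ (prime_gt1 pp))) _.
    exact: dvdn_leq n0 (pfactor_dvdnn p n).
  have := Eeq p pp (dvdn_leq n0 pn).
  rewrite (@E_cnt _ G p n pp (leqnn n)) (@E_cnt _ C p n pp lC) => Es.
  apply/eqP; rewrite eqn_leq cnt_le //= leqNgt; apply/negP => lt.
  have : \sum_(1 <= k < n.+1) cnt G p k < \sum_(1 <= k < n.+1) cnt C p k.
    apply: (sum_strict (j := logn p n)) => //; first by rewrite b0.
    by move=> i /andP[i1 _]; apply: cnt_le.
  by rewrite Es ltnn.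
have struct : forall p (P : {group gT}), prime p -> p %| n -> (p.-Sylow(G) P)%g ->
    cyclic P /\ ('N_G(P) \subset 'C(P))%g.
  move=> p P pp pn sylP; apply: (@sylow_struct _ G P p) => //.
  have b0 : 0 < logn p n by rewrite logn_gt0 mem_primes pp n0 pn.
  have := cnt_Ldiv G pp b0.
  rewrite (cnt_eq cC oC pp b0 (pfactor_dvdnn p n) (cnteq p pp pn)).
  by rewrite np_form.
have ab : abelian G.
  apply/derG1P; have [//|[q qp qd]] := trivgVpdiv (G^`(1))%g.
  have qn : q %| n := dvdn_trans qd (cardSg (der_sub 1 G)).
  have [P sylP] := Sylow_exists q G.
  have [cP nc] := struct q P qp qn sylP.
  have := burnside_der qp sylP (cyclic_abelian cP) nc.
  by rewrite /pgroup p'natE // qd.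
have Zg : Zgroup G.
  apply/forall_inP => V /SylowP[q qp sylV].
  case: (boolP (q %| n)) => qn; first by case: (struct q V qp qn sylV).
  have -> : V = 1%G :> {group gT}.
    apply/val_inj => /=; apply: card_le1_trivg.
    by rewrite (card_Hall sylV) part_p'nat // p'natE.
  exact: cyclic1.
exact: nil_Zgroup_cyclic Zg (abelian_nil ab).
Qed.
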